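(* In any $(m_A,m_B,2,2)$-scenario, every unbiased quantum behavior is a Gram-Lorentz behavior.
   Context: In an $(m_A,m_B,o_A,o_B)$-scenario a behavior is a vector $\mathbf{p}=(p(ab|xy))$ indexed by $a\in[o_A]$, $b\in[o_B]$, $x\in[m_A]$, $y\in[m_B]$ (for $o_A=o_B=2$ the outcomes are labelled $a,b\in\{\pm1\}$). It is quantum if there exist $d\ge1$, a Hermitian positive semidefinite trace-one matrix $\rho$ on $\mathbb{C}^d\otimes\mathbb{C}^d$, and for each $x$ Hermitian psd $d\times d$ matrices $\{M_{a|x}\}_a$ with $\sum_aM_{a|x}=I_d$, and for each $y$ Hermitian psd $d\times d$ matrices $\{N_{b|y}\}_b$ with $\sum_bN_{b|y}=I_d$, such that $p(ab|xy)=\mathrm{Tr}((M_{a|x}\otimes N_{b|y})\rho)$ for all $a,b,x,y$. For quantum behaviors the marginals $p_A(a|x):=\sum_bp(ab|xy)$ and $p_B(b|y):=\sum_ap(ab|xy)$ do not depend on $y$, resp. $x$; in the binary-outcome case $\mathbf{p}$ is unbiased if $p_A(a|x)=p_B(b|y)=1/2$ for all $a,b,x,y$. Let $N:=m_Ao_A+m_Bo_B$ and let $\mathcal{A}(\mathbf{p})$ be the set of real symmetric $N\times N$ matrices $R$ indexed by $([m_A]\times[o_A])\cup([m_B]\times[o_B])$ with $\sum_{a,a'}R_{xa,x'a'}=1$ for all $x,x'\in[m_A]$, $\sum_{a,b}R_{xa,yb}=1$ for all $x\in[m_A],y\in[m_B]$, $\sum_{b,b'}R_{yb,y'b'}=1$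 for all $y,y'\in[m_B]$, and $R_{xa,yb}=p(ab|xy)$ for all $a,b,x,y$. With the Lorentz cone $\mathcal{L}_m:=\{(c,x)\in\mathbb{R}\times\mathbb{R}^{m-1}:c\ge\|x\|\}$, a matrix is Gram-Lorentz if it is the Gram matrix of vectors in some $\mathcal{L}_m$. A quantum behavior $\mathbf{p}$ is a Gram-Lorentz behavior if there exists a Gram-Lorentz matrix $R\in\mathcal{A}(\mathbf{p})$. *)

(* Defs.v *)
From HB Require Import structures.
From mathcomp Require Import all_boot all_order all_algebra.
From mathcomp Require Import complex mxtens.
From mathcomp Require Import reals.
Set Implicit Arguments. Unset Strict Implicit. Unset Printing Implicit Defensive.
Import Order.TTheory GRing.Theory Num.Theory.
Local Open Scope ring_scope.

(* A behavior in an (mA,mB,oA,oB)-scenario: p a b x y = p(ab|xy). *)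
Definition behavior (R : realType) (mA mB oA oB : nat) :=
  'I_oA -> 'I_oB -> 'I_mA -> 'I_mB -> R.

Definition adjmx (R : realType) (m n : nat) (A : 'M[R[i]]_(m, n)) : 'M[R[i]]_(n, m) :=
  (map_mx Num.conj A)^T.

Definition hermitian (R : realType) (d : nat) (A : 'M[R[i]]_d) : Prop :=
  adjmx A = A.

Definition psd (R : realType) (d : nat) (A : 'M[R[i]]_d) : Prop :=
  hermitian A /\ forall v : 'cV[R[i]]_d, 0 <= (adjmx v *m A *m v) 0 0.

Definition density (R : realType) (d : nat) (rho : 'M[R[i]]_(d * d)) : Prop :=
  psd rho /\ \tr rho = 1.

Definition povm (R : realType) (d o : nat) (M : 'I_o -> 'M[R[i]]_d) : Prop :=
  (forall a, psd (M a)) /\ \sum_(a < o) M a = 1%:M.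

Definition quantum_behavior (R : realType) (mA mB oA oB : nat)
  (p : behavior R mA mB oA oB) : Prop :=
  exists (d : nat) (rho : 'M[R[i]]_(d * d))
         (M : 'I_mA -> 'I_oA -> 'M[R[i]]_d) (N : 'I_mB -> 'I_oB -> 'M[R[i]]_d),
    [/\ (0 < d)%N, density rho, (forall x, povm (M x)), (forall y, povm (N y)) &
      forall a b x y, real_complex R (p a b x y) = \tr ((M x a *t N y b) *m rho)].

Definition unbiased (R : realType) (mA mB : nat) (p : behavior R mA mB 2 2) : Prop :=
  (forall a x y, \sum_(b < 2) p a b x y = 2^-1) /\
  (forall b x y, \sum_(a < 2) p a b x y = 2^-1).

Definition idx (mA mB oA oB : nat) : finType :=
  (('I_mA * 'I_oA) + ('I_mB * 'I_oB))%type.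

Definition in_A (R : realType) (mA mB oA oB : nat) (p : behavior R mA mB oA oB)
  (Rm : idx mA mB oA oB -> idx mA mB oA oB -> R) : Prop :=
  [/\ (forall i j, Rm i j = Rm j i),
      (forall x x' : 'I_mA,
          \sum_(a < oA) \sum_(a' < oA) Rm (inl (x, a)) (inl (x', a')) = 1),
      (forall (x : 'I_mA) (y : 'I_mB),
          \sum_(a < oA) \sum_(b < oB) Rm (inl (x, a)) (inr (y, b)) = 1),
      (forall y y' : 'I_mB,
          \sum_(b < oB) \sum_(b' < oB) Rm (inr (y, b)) (inr (y', b')) = 1) &
      (forall a b x y, Rm (inl (x, a)) (inr (y, b)) = p a b x y)].

Definition lorentz (R : realType) (k : nat) (v : 'rV[R]_k.+1) : Prop :=
  Num.sqrt (\sum_(i < k) v 0 (lift ord0 i) ^+ 2) <= v 0 ord0.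

Definition gram_lorentz (R : realType) (T : finType) (Rm : T -> T -> R) : Prop :=
  exists (k : nat) (v : T -> 'rV[R]_k.+1),
    (forall t, lorentz (v t)) /\
    forall s t, Rm s t = \sum_(l < k.+1) v s 0 l * v t 0 l.

Definition gram_lorentz_behavior (R : realType) (mA mB oA oB : nat)
  (p : behavior R mA mB oA oB) : Prop :=
  quantum_behavior p /\
  exists Rm : idx mA mB oA oB -> idx mA mB oA oB -> R, in_A p Rm /\ gram_lorentz Rm.

(* Main.v *)
Require Import Defs.
From HB Require Import structures.
From mathcomp Require Import all_boot all_order all_algebra.
From mathcomp Require Import complex mxtens reals.
From mathcomp Require Import ring lra.
Set Implicit Arguments. Unset Strict Implicit. Unset Printing Implicit Defensive.
Import Order.TTheory GRing.Theory Num.Theory.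
Local Open Scope ring_scope.

Section Aux.
Variable R : realType.
Local Notation C := (R[i]).

Lemma adjmx_mul m n p (A : 'M[C]_(m, n)) (B : 'M[C]_(n, p)) :
  adjmx (A *m B) = adjmx B *m adjmx A.
Proof. by rewrite /adjmx map_mxM trmx_mul. Qed.

Lemma adjmxK m n (A : 'M[C]_(m, n)) : adjmx (adjmx A) = A.
Proof. by apply/matrixP=> i j; rewrite !mxE conjCK. Qed.

Lemma adjmxD m n (A B : 'M[C]_(m, n)) : adjmx (A + B) = adjmx A + adjmx B.
Proof. by apply/matrixP=> i j; rewrite !mxE rmorphD. Qed.

Lemma adjmxN m n (A : 'M[C]_(m, n)) : adjmx (- A) = - adjmx A.
Proof. by apply/matrixP=> i j; rewrite !mxE rmorphN. Qed.

Lemma adjmx1 n : adjmx (1%:M : 'M[C]_n) = 1%:M.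
Proof. by apply/matrixP=> i j; rewrite !mxE eq_sym; case: eqP; rewrite ?rmorph1 ?rmorph0. Qed.

Lemma adjmx_tens m n p q (A : 'M[C]_(m, n)) (B : 'M[C]_(p, q)) :
  adjmx (A *t B) = adjmx A *t adjmx B.
Proof. by apply/matrixP=> i j; rewrite !mxE rmorphM. Qed.

Lemma tensmxDl m n p q (A B : 'M[C]_(m, n)) (D : 'M[C]_(p, q)) :
  (A + B) *t D = A *t D + B *t D.
Proof. by apply/matrixP=> i j; rewrite !mxE mulrDl. Qed.

Lemma tensmxDr m n p q (A : 'M[C]_(m, n)) (B D : 'M[C]_(p, q)) :
  A *t (B + D) = A *t B + A *t D.
Proof. by apply/matrixP=> i j; rewrite !mxE mulrDr. Qed.

Lemma tensmxNl m n p q (A : 'M[C]_(m, n)) (D : 'M[C]_(p, q)) :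
  (- A) *t D = - (A *t D).
Proof. by apply/matrixP=> i j; rewrite !mxE mulNr. Qed.

Lemma tensmxNr m n p q (A : 'M[C]_(m, n)) (D : 'M[C]_(p, q)) :
  A *t (- D) = - (A *t D).
Proof. by apply/matrixP=> i j; rewrite !mxE mulrN. Qed.

Lemma tensmx11 m n : (1%:M : 'M[C]_m) *t (1%:M : 'M[C]_n) = 1%:M.
Proof.
apply/matrixP=> i j.
rewrite -(mxtens_unindexK i) -(mxtens_unindexK j).
case: (mxtens_unindex i) => i1 i2; case: (mxtens_unindex j) => j1 j2.
rewrite tensmxE !mxE (inj_eq (can_inj (@mxtens_indexK m n))) xpair_eqE.
by case: (i1 == j1); case: (i2 == j2); rewrite /= ?mulr1 ?mulr0 ?mul0r.
Qed.

Definition ip m n (U V : 'M[C]_(m, n)) : R := complex.Re (\tr (adjmx U *m V)).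

Lemma Re_sum (I : Type) (r : seq I) (P : pred I) (F : I -> C) :
  complex.Re (\sum_(i <- r | P i) F i) = \sum_(i <- r | P i) complex.Re (F i).
Proof. by apply: (big_morph (@complex.Re R)) => // [[a b] [c d]]. Qed.

Lemma Re_conjM (a b : C) :
  complex.Re (Num.conj a * b) = complex.Re a * complex.Re b + complex.Im a * complex.Im b.
Proof. case: a b => a1 a2 [b1 b2] /=. ring. Qed.

Definition cT m n := ('I_m * 'I_n * bool)%type.

Definition cft m n (U : 'M[C]_(m, n)) (t : cT m n) : R :=
  let: (i, j, b) := t in
  if b then complex.Re (U i j) else complex.Im (U i j).

Definition cf m n (U : 'M[C]_(m, n)) (l : 'I_#|{: cT m n}|) : R :=
  cft U (enum_val l).

Lemma ip_coord m n (U V : 'M[C]_(m, n)) :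
  ip U V = \sum_(l < #|{: cT m n}|) cf U l * cf V l.
Proof.
transitivity (\sum_(t in {: cT m n}) cft U t * cft V t); last first.
  exact: big_enum_val.
transitivity (\sum_(t : cT m n) cft U t * cft V t); last by apply: eq_bigl.
transitivity (\sum_(i < m) \sum_(j < n) \sum_(b : bool) cft U (i, j, b) * cft V (i, j, b)).
  rewrite /ip /mxtrace Re_sum.
  under eq_bigr => j _ do rewrite mxE Re_sum.
  rewrite exchange_big /=; apply: eq_bigr => i _.
  apply: eq_bigr => j _; rewrite big_bool /= !mxE Re_conjM.
  done.
rewrite pair_bigA pair_bigA /=; apply: eq_bigr => -[[i j] b] //.
Qed.

Lemma ip_ge0 m n (U : 'M[C]_(m, n)) : 0 <= ip U U.
Proof. by rewrite ip_coord; apply: sumr_ge0 => l _; rewrite -expr2 sqr_ge0. Qed.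

Lemma ipC m n (U V : 'M[C]_(m, n)) : ip U V = ip V U.
Proof. by rewrite !ip_coord; apply: eq_bigr => l _; rewrite mulrC. Qed.

Lemma ipE m n (U V : 'M[C]_(m, n)) : ip U V = complex.Re (\tr (adjmx U *m V)).
Proof. by []. Qed.

Lemma ReD (a b : C) : complex.Re (a + b) = complex.Re a + complex.Re b.
Proof. by case: a b => ? ? [? ?]. Qed.
Lemma ReN (a : C) : complex.Re (- a) = - complex.Re a.
Proof. by case: a. Qed.

Lemma ipDr m n (U V W : 'M[C]_(m, n)) : ip U (V + W) = ip U V + ip U W.
Proof. by rewrite /ip mulmxDr mxtraceD ReD. Qed.

Lemma ipNr m n (U V : 'M[C]_(m, n)) : ip U (- V) = - ip U V.
Proof. by rewrite /ip mulmxN linearN ReN. Qed.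


Lemma adjE m n (X : 'M[C]_(m, n)) : adjmx X = (X ^t Num.conj)%sesqui.
Proof. by rewrite /adjmx map_trmx. Qed.

Lemma diag_entry n (i : 'I_n) (sp : 'rV[C]_n) :
  (('e_i : 'rV[C]_n) *m diag_mx sp *m adjmx ('e_i : 'rV[C]_n)) 0 0 = sp 0 i.
Proof.
rewrite mul_mx_diag !mxE (bigD1 i) //= big1 ?addr0.
  by rewrite !mxE !eqxx /= mul1r rmorph1 mulr1.
by move=> j ji; rewrite !mxE (negbTE ji) /= mul0r mul0r.
Qed.

Lemma psd_factor n (A : 'M[C]_n) : psd A -> exists L : 'M[C]_n, A = L *m adjmx L.
Proof.
move=> [hA pA].
have hs : A \is hermsymmx.
  by apply/is_hermitianmxP; rewrite expr0 scale1r -adjE hA.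
have /orthomx_spectralP eA := hermitian_normalmx hs.
set P := spectralmx A in eA; set sp := spectral_diag A in eA.
have uP : P \is unitarymx by apply: spectral_unitarymx.
have PP : P *m adjmx P = 1%:M by rewrite adjE; apply/unitarymxP.
rewrite invmx_unitary // -adjE in eA.
have sp0 i : 0 <= sp 0 i.
  have := pA (adjmx (row i P)); rewrite adjmxK eA !mulmxA -row_mul PP.
  by rewrite (rowE i P) adjmx_mul !mulmxA -(mulmxA _ P) PP mulmx1 rowE mulmx1 diag_entry.
exists (adjmx P *m diag_mx (map_mx sqrtC sp)).
rewrite adjmx_mul adjmxK eA -!mulmxA; congr (_ *m _); rewrite !mulmxA; congr (_ *m _).
have adjD (d : 'rV[C]_n) : adjmx (diag_mx d) = diag_mx (map_mx Num.conj d).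
  by apply/matrixP => a b; rewrite !mxE eq_sym; case: eqP => [->|]; rewrite ?mulr1n ?mulr0n ?rmorph0.
rewrite adjD mulmx_diag; congr diag_mx; apply/rowP => j; rewrite !mxE.
by rewrite conj_Creal ?sqrtC_real // -expr2 sqrtCK.
Qed.

Lemma key_id dd (M0 M1 : 'M[C]_dd.+1) : M0 + M1 = 1 ->
  1 - (M0 - M1) * (M0 - M1) = (M1 * M0 * M1 + M0 * M1 * M0) *+ 4.
Proof.
move=> h; have eM1 : M1 = 1 - M0 by rewrite -h addrAC subrr add0r.
rewrite eM1.
have E : (1 - ('X - (1 - 'X)) * ('X - (1 - 'X)) : {poly C})
   = ((1 - 'X) * 'X * (1 - 'X) + 'X * (1 - 'X) * 'X) *+ 4 by ring.
have := congr1 (horner_mx M0) E.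
rewrite !(rmorphB, rmorphM, rmorphD, rmorphMn, rmorph1).
have hX : horner_mx M0 'X = M0 := horner_mx_X M0.
by rewrite /= !hX.
Qed.

Section Bound.
Variables (dd n : nat) (f : 'M[C]_dd.+1 -> 'M[C]_n).
Hypothesis fD : forall X Y, f (X + Y) = f X + f Y.
Hypothesis fN : forall X, f (- X) = - f X.
Hypothesis fM : forall X Y, f (X *m Y) = f X *m f Y.
Hypothesis f1 : f 1%:M = 1%:M.
Hypothesis fadj : forall X, f (adjmx X) = adjmx (f X).
Variable L : 'M[C]_n.
Hypothesis trL : \tr (L *m adjmx L) = 1.

Let g X := complex.Re (\tr (adjmx L *m f X *m L)).

Let gD X Y : g (X + Y) = g X + g Y.
Proof. by rewrite /g fD mulmxDr mulmxDl mxtraceD ReD. Qed.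

Let gB X Y : g (X - Y) = g X - g Y.
Proof. by rewrite gD /g fN mulmxN mulNmx linearN ReN. Qed.

Let g_ge0 (W : 'M[C]_dd.+1) : 0 <= g (W *m adjmx W).
Proof.
rewrite /g fM fadj.
have -> : adjmx L *m (f W *m adjmx (f W)) *m L
   = adjmx (adjmx (f W) *m L) *m (adjmx (f W) *m L).
  by rewrite adjmx_mul adjmxK !mulmxA.
exact: ip_ge0.
Qed.

Let g1 : g 1%:M = 1.
Proof. by rewrite /g f1 mulmx1 mxtrace_mulC trL. Qed.

Let ip_f A : adjmx A = A -> ip (f A *m L) (f A *m L) = g (A *m A).
Proof. by move=> hA; rewrite /ip /g adjmx_mul -fadj hA fM !mulmxA. Qed.

Lemma bound (M0 M1 : 'M[C]_dd.+1) : psd M0 -> psd M1 -> M0 + M1 = 1%:M ->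
  ip (f (M0 - M1) *m L) (f (M0 - M1) *m L) <= 1.
Proof.
move=> p0 p1 h.
have [Q0 e0] := psd_factor p0.
have [Q1 e1] := psd_factor p1.
have h0 : adjmx M0 = M0 by case: p0.
have h1 : adjmx M1 = M1 by case: p1.
have hA : adjmx (M0 - M1) = M0 - M1 by rewrite adjmxD adjmxN h0 h1.
rewrite ip_f // -subr_ge0 -g1 -gB.
rewrite -[1%:M]/(1 : 'M[C]_dd.+1) mulmxE key_id //.
have S1 : M1 * M0 * M1 = (M1 *m Q0) *m adjmx (M1 *m Q0).
  by rewrite adjmx_mul h1 e0 !mulmxE !mulrA.
have S2 : M0 * M1 * M0 = (M0 *m Q1) *m adjmx (M0 *m Q1).
  by rewrite adjmx_mul h0 e1 !mulmxE !mulrA.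
have gS : 0 <= g (M1 * M0 * M1 + M0 * M1 * M0).
  by rewrite gD S1 S2; apply: addr_ge0; apply: g_ge0.
set S := (M1 * M0 * M1 + M0 * M1 * M0) in gS *.
have -> : S *+ 4 = S + S + S + S.
  by rewrite !mulrSr mulr0n add0r.
by rewrite 3!gD; do 3 (apply: addr_ge0 => //).
Qed.
End Bound.
End Aux.

Lemma I2_cases (a : 'I_2) : a = ord0 \/ a = lift ord0 (ord0 : 'I_1).
Proof. by case: a => [[|[|?]] ?] //; [left|right]; apply: val_inj. Qed.

Lemma sum2 (V : nmodType) (F : 'I_2 -> V) :
  \sum_(a < 2) F a = F ord0 + F (lift ord0 (ord0 : 'I_1)).
Proof. by rewrite big_ord_recl big_ord1. Qed.

Theorem theorem4p12 (R : realType) (mA mB : nat) (p : behavior R mA mB 2 2) :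
  quantum_behavior p -> unbiased p -> gram_lorentz_behavior p.
Proof.
move=> qp [ubA ubB]; split; first exact: qp.
case: qp => d [rho [M [N [dpos dens pM pN hp]]]].
case: d dpos rho M N dens pM pN hp => // dd _ rho M N dens pM pN hp.
set n := (dd.+1 * dd.+1)%N.
set i1 : 'I_2 := lift ord0 (ord0 : 'I_1).
have [L eL] := psd_factor dens.1.
have trL : \tr (L *m adjmx L) = 1 by rewrite -eL; case: dens.
pose fA (X : 'M[R[i]]_dd.+1) : 'M[R[i]]_n := X *t (1%:M : 'M[R[i]]_dd.+1).
pose fB (X : 'M[R[i]]_dd.+1) : 'M[R[i]]_n := (1%:M : 'M[R[i]]_dd.+1) *t X.
pose Ax x := M x ord0 - M x i1.
pose By y := N y ord0 - N y i1.
pose u x := fA (Ax x) *m L.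
pose z y := fB (By y) *m L.
have sM x : M x ord0 + M x i1 = 1%:M by rewrite -sum2; case: (pM x).
have sN y : N y ord0 + N y i1 = 1%:M by rewrite -sum2; case: (pN y).
have bu x : ip (u x) (u x) <= 1.
  apply: (bound (f := fA)) => //.
  - by move=> X Y; rewrite /fA tensmxDl.
  - by move=> X; rewrite /fA tensmxNl.
  - by move=> X Y; rewrite /fA tensmx_mul mulmx1.
  - exact: tensmx11.
  - by move=> X; rewrite /fA adjmx_tens adjmx1.
  - by case: (pM x) => /(_ ord0).
  - by case: (pM x) => /(_ i1).
have bz y : ip (z y) (z y) <= 1.
  apply: (bound (f := fB)) => //.
  - by move=> X Y; rewrite /fB tensmxDr.
  - by move=> X; rewrite /fB tensmxNr.
  - by move=> X Y; rewrite /fB tensmx_mul mulmx1.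
  - exact: tensmx11.
  - by move=> X; rewrite /fB adjmx_tens adjmx1.
  - by case: (pN y) => /(_ ord0).
  - by case: (pN y) => /(_ i1).
have hAx x : adjmx (Ax x) = Ax x.
  by rewrite /Ax adjmxD adjmxN; case: (pM x) => h _; rewrite (h ord0).1 (h i1).1.
have Rep a b x y : complex.Re (\tr ((M x a *t N y b) *m rho)) = p a b x y.
  by rewrite -hp.
have cor x y : ip (u x) (z y)
    = p ord0 ord0 x y - p ord0 i1 x y - (p i1 ord0 x y - p i1 i1 x y).
  rewrite /ip /u /z adjmx_mul -!mulmxA mxtrace_mulC !mulmxA.
  rewrite -(mulmxA _ L) -eL /fA /fB adjmx_tens adjmx1 hAx tensmx_mul mulmx1 mul1mx.
  rewrite /Ax /By tensmxDl !tensmxDr !tensmxNl !tensmxNr.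
  rewrite !mulmxDl !mulNmx !mxtraceD opprK !raddfN !ReD !ReN !Rep.
  lra.
pose sg (t : idx mA mB 2 2) : R :=
  match t with inl (_, a) | inr (_, a) => if val a == 0%N then 1 else -1 end.
pose wv (t : idx mA mB 2 2) : 'M[R[i]]_n :=
  match t with inl (x, _) => u x | inr (y, _) => z y end.
pose k := #|{: cT n n}|.
pose vec (t : idx mA mB 2 2) : 'rV[R]_k.+1 :=
  \row_l (match unlift ord0 l with Some j => sg t / 2 * cf (wv t) j | None => 1 / 2 end).
pose Rm s t := \sum_(l < k.+1) vec s 0 l * vec t 0 l.
have key s t : Rm s t = 1 / 4 + sg s * sg t / 4 * ip (wv s) (wv t).
  rewrite /Rm big_ord_recl !mxE unlift_none.
  under eq_bigr => j _ do rewrite !mxE liftK mulrACA.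
  by rewrite -mulr_sumr -ip_coord; field.
have sg2 t : sg t * sg t = 1.
  by case: t => -[? a]; rewrite /sg; case: (val a == 0%N); rewrite ?mulr1 ?mulrNN ?mulr1.
exists Rm; split; last first.
  exists k, vec; split => // tt; rewrite /lorentz !mxE unlift_none.
  have bw : ip (wv tt) (wv tt) <= 1 by case: tt => -[? ?]; [apply: bu|apply: bz].
  have bw0 := ip_ge0 (wv tt).
  have -> : \sum_(i < k) vec tt 0 (lift ord0 i) ^+ 2 = 1/4 * ip (wv tt) (wv tt).
    rewrite ip_coord mulr_sumr; apply: eq_bigr => j _; rewrite !mxE liftK.
    have h4 : sg tt / 2 * (sg tt / 2) = 1/4 by rewrite mulrACA sg2; field.
    by rewrite expr2 mulrACA h4.
  have e : Num.sqrt ((1/2) ^+ 2) = 1/2 :> R.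
    by rewrite sqrtr_sqr ger0_norm //; lra.
  rewrite -e ler_sqrt; first by rewrite expr2; lra.
  by rewrite expr2; lra.
split.
- by move=> s t; rewrite /Rm; apply: eq_bigr => l _; rewrite mulrC.
- by move=> x x'; rewrite !sum2 !key /=; lra.
- by move=> x y; rewrite !sum2 !key /=; lra.
- by move=> y y'; rewrite !sum2 !key /=; lra.
move=> a b x y; rewrite key /= cor.
have h1 := ubA ord0 x y; have h2 := ubA i1 x y.
have h3 := ubB ord0 x y; have h4 := ubB i1 x y.
rewrite !sum2 -/i1 in h1 h2 h3 h4.
by case: (I2_cases a) => ->; case: (I2_cases b) => -> /=; lra.
Qed.
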